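(* Let $\mathfrak{g}$ be a finite-dimensional indecomposable metric Lie algebra with index $r>0$ admitting a maximally isotropic centre. Then as a vector space $$\mathfrak{g} = \bigoplus_{i=1}^r \left(\mathbb{R} u_i \oplus \mathbb{R} v_i\right) \oplus E,$$ where $E$ is a euclidean (positive-definite) subspace, $u_i, v_i \perp E$, $\langle u_i,v_j\rangle= \delta_{ij}$, $\langle u_i,u_j\rangle = \langle v_i,v_j\rangle = 0$ (the $v_i$ spanning the centre). Moreover the Lie bracket is given by $$[u_i,u_j] = K_{ij} + \sum_{k=1}^r L_{ijk} v_k,\qquad [u_i,x] = J_ix - \sum_{j=1}^r \langle K_{ij},x\rangle v_j,\qquad [x,y] = - \sum_{i=1}^r \langle x, J_i y\rangle v_i$$ for all $x,y\in E$ (and the $v_i$ are central), where $K_{ij} = - K_{ji} \in E$, $L_{ijk} \in \mathbb{R}$ is totally skewsymmetric in its indices, $J_i \in \mathfrak{so}(E)$, and in addition these obey $$J_i J_j - J_j J_i = 0,\qquad J_i K_{jk} + J_j K_{ki} + J_k K_{ij} = 0,\qquad \langle K_{\ell i},K_{jk}\rangle + \langle K_{\ell j},K_{ki}\rangle + \langle K_{\ell k},K_{ij}\rangle =0$$ for all indices $i,j,k,\ell\in\{1,\dots,r\}$.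
   Context: A metric Lie algebra is a real Lie algebra with a nondegenerate symmetric bilinear form $\langle-,-\rangle$ which is ad-invariant: $\langle [x,y],z\rangle = -\langle y,[x,z]\rangle$. It is indecomposable if it is not isomorphic to an orthogonal direct sum of two metric Lie algebras of positive dimension. Its index is the dimension of a maximal negative-definite subspace. A maximally isotropic centre is a subspace $Z$ of the centre of the Lie algebra whose dimension equals the index and on which the inner product vanishes identically. $\mathfrak{so}(E)$ denotes the skewsymmetric endomorphisms of the euclidean space $E$. *)

(* Defs.v *)
From HB Require Import structures.
From mathcomp Require Import all_boot all_order all_algebra.
From mathcomp Require Import reals.
Set Implicit Arguments. Unset Strict Implicit. Unset Printing Implicit Defensive.
Import Order.TTheory GRing.Theory Num.Theory.
Local Open Scope ring_scope.

Section MetricLie.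
Variables (R : realType) (V : vectType R).

Definition is_lie_bracket (br : V -> V -> V) : Prop :=
  [/\ (forall a x y z, br (a *: x + y) z = a *: br x z + br y z),
      (forall a x y z, br z (a *: x + y) = a *: br z x + br z y),
      (forall x, br x x = 0) &
      (forall x y z, br x (br y z) + br y (br z x) + br z (br x y) = 0)].

Definition is_metric (br : V -> V -> V) (B : V -> V -> R) : Prop :=
  [/\ (forall a x y z, B (a *: x + y) z = a * B x z + B y z),
      (forall x y, B x y = B y x),
      (forall x, (forall y, B x y = 0) -> x = 0) &
      (forall x y z, B (br x y) z = - B y (br x z))].

Definition neg_definite (B : V -> V -> R) (U : {vspace V}) : Prop :=
  forall x, x \in U -> x != 0 -> B x x < 0.

Definition pos_definite (B : V -> V -> R) (U : {vspace V}) : Prop :=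
  forall x, x \in U -> x != 0 -> 0 < B x x.

Definition has_index (B : V -> V -> R) (r : nat) : Prop :=
  (exists U : {vspace V}, neg_definite B U /\ \dim U = r) /\
  (forall U : {vspace V}, neg_definite B U -> (\dim U <= r)%N).

Definition central (br : V -> V -> V) (x : V) : Prop := forall y, br x y = 0.

Definition indecomposable (br : V -> V -> V) (B : V -> V -> R) : Prop :=
  ~ exists I J : {vspace V},
      I != 0%VS /\ J != 0%VS /\ (I + J)%VS = fullv /\ directv (I + J) /\
      (forall x y, x \in I -> y \in J -> B x y = 0 /\ br x y = 0) /\
      (forall x y, x \in I -> y \in I -> br x y \in I) /\
      (forall x y, x \in J -> y \in J -> br x y \in J).

Definition has_max_isotropic_centre (br : V -> V -> V) (B : V -> V -> R)
    (r : nat) : Prop :=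
  exists Z : {vspace V},
    [/\ (forall z, z \in Z -> central br z), \dim Z = r &
        (forall x y, x \in Z -> y \in Z -> B x y = 0)].

End MetricLie.

(* Main.v *)
Require Import Defs.
From HB Require Import structures.
From mathcomp Require Import all_boot all_order all_algebra.
From mathcomp Require Import reals.
From mathcomp Require Import ring lra.
From Stdlib Require Import Classical.
Set Implicit Arguments. Unset Strict Implicit. Unset Printing Implicit Defensive.
Import Order.TTheory GRing.Theory Num.Theory.
Local Open Scope ring_scope.


Lemma lfunE_gen (R : fieldType) (aT rT : vectType R) (f : aT -> rT) :
  (forall a x y, f (a *: x + y) = a *: f x + f y) -> linfun f =1 f.
Proof.
move=> H.
pose lf : {linear aT -> rT} := HB.pack f (GRing.isLinear.Build R aT rT *:%R f H).
exact: (lfunE lf).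
Qed.

Section Gen.
Variables (R : realFieldType) (W : vectType R) (h : W -> W -> R).
Hypothesis hlin : forall a x y z, h (a *: x + y) z = a * h x z + h y z.
Hypothesis hsym : forall x y, h x y = h y x.

Lemma h0l z : h 0 z = 0.
Proof. by have := hlin 1 0 0 z; rewrite scale1r addr0 mul1r => H; lra. Qed.
Lemma hDl x y z : h (x + y) z = h x z + h y z.
Proof. by have := hlin 1 x y z; rewrite scale1r mul1r. Qed.
Lemma hZl a x z : h (a *: x) z = a * h x z.
Proof. by have := hlin a x 0 z; rewrite addr0 h0l addr0. Qed.
Lemma hNl x z : h (- x) z = - h x z.
Proof. by rewrite -scaleN1r hZl mulN1r. Qed.
Lemma hBl x y z : h (x - y) z = h x z - h y z.
Proof. by rewrite hDl hNl. Qed.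
Lemma hsuml (I : Type) (s : seq I) (P : pred I) (F : I -> W) z :
  h (\sum_(i <- s | P i) F i) z = \sum_(i <- s | P i) h (F i) z.
Proof. by elim/big_rec2: _ => [|i a b _ <-]; rewrite ?h0l ?hDl. Qed.
Lemma h0r z : h z 0 = 0. Proof. by rewrite hsym h0l. Qed.
Lemma hDr x y z : h z (x + y) = h z x + h z y. Proof. by rewrite !(hsym z) hDl. Qed.
Lemma hZr a x z : h z (a *: x) = a * h z x. Proof. by rewrite !(hsym z) hZl. Qed.
Lemma hNr x z : h z (- x) = - h z x. Proof. by rewrite !(hsym z) hNl. Qed.
Lemma hBr x y z : h z (x - y) = h z x - h z y. Proof. by rewrite !(hsym z) hBl. Qed.
Lemma hsumr (I : Type) (s : seq I) (P : pred I) (F : I -> W) z :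
  h z (\sum_(i <- s | P i) F i) = \sum_(i <- s | P i) h z (F i).
Proof. by rewrite hsym hsuml; apply: eq_bigr => i _; rewrite hsym. Qed.

Definition orthF m (w : 'I_m -> W) : {vspace W} :=
  lker (linfun (fun x => \row_(k < m) h x (w k))).

Lemma orthF_lin m (w : 'I_m -> W) a x y :
  \row_(k < m) h (a *: x + y) (w k) = a *: \row_(k < m) h x (w k) + \row_(k < m) h y (w k).
Proof. by apply/rowP => k; rewrite !mxE hlin. Qed.

Lemma memv_orthF m (w : 'I_m -> W) x :
  x \in orthF w <-> forall k, h x (w k) = 0.
Proof.
rewrite memv_ker lfunE_gen; last exact: orthF_lin.
split=> [/eqP/rowP H k | H]; first by have := H k; rewrite !mxE.
by apply/eqP/rowP => k; rewrite !mxE H.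
Qed.

Lemma dim_orthF m (w : 'I_m -> W) : (\dim {:W} <= \dim (orthF w) + m)%N.
Proof.
have := limg_ker_dim (linfun (fun x => \row_(k < m) h x (w k))) fullv.
rewrite capfv => <-; rewrite leq_add2l.
apply: leq_trans (dimvS (subvf _)) _.
by rewrite dimvf /dim /= mul1n.
Qed.

Definition orthv (U : {vspace W}) := orthF (fun k : 'I_(\dim U) => (vbasis U)`_k).

Lemma memv_orth U x : x \in orthv U <-> forall y, y \in U -> h x y = 0.
Proof.
rewrite memv_orthF; split=> [H y Uy | H k].
  rewrite (coord_vbasis Uy) hsumr big1 // => i _.
  by rewrite hZr H mulr0.
by apply: H; apply: vbasis_mem; apply: mem_nth; rewrite size_tuple.
Qed.

Lemma dim_orthv U : (\dim {:W} <= \dim (orthv U) + \dim U)%N.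
Proof. exact: dim_orthF. Qed.

Lemma GP (A0 : {vspace W}) :
  (forall a, a \in A0 -> a != 0 -> 0 < h a a) ->
  forall w, exists2 a, a \in A0 & forall a', a' \in A0 -> h (w - a) a' = 0.
Proof.
move=> pd w.
have cap0 : (A0 :&: orthv A0 = 0)%VS.
  apply/eqP; rewrite -subv0; apply/subvP => y /memv_capP [Ay /memv_orth Oy].
  rewrite memv0; apply/negPn/negP => nz.
  by have := pd y Ay nz; rewrite Oy // ltxx.
have full : (A0 + orthv A0)%VS = fullv.
  apply/eqP; rewrite eqEdim subvf dimv_disjoint_sum // addnC.
  exact: dim_orthv.
have : w \in (A0 + orthv A0)%VS by rewrite full memvf.
case/memv_addP => a Aa [p /memv_orth Op ->].
by exists a => // a' Aa'; rewrite addrC addKr Op.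
Qed.

Lemma Riesz : (forall x, (forall y, h x y = 0) -> x = 0) ->
  forall f : W -> R, (forall a x y, f (a *: x + y) = a * f x + f y) ->
  exists x, forall y, h x y = f y.
Proof.
move=> nd f flin.
have inlin x : forall a y z, (h x (a *: y + z) : R^o) = a *: (h x y : R^o) + h x z.
  by move=> a y z; rewrite hsym hlin !(hsym x).
pose Phi : 'Hom(W, 'Hom(W, R^o)) := linfun (fun x => linfun (fun y => h x y : R^o)).
have Philin : forall a x y, linfun (fun z => h (a *: x + y) z : R^o) =
   a *: linfun (fun z => h x z : R^o) + linfun (fun z => h y z : R^o).
  move=> a x y; apply/lfunP => z.
  by rewrite add_lfunE scale_lfunE !lfunE_gen // hlin.
have PhiE x y : Phi x y = h x y.
  by rewrite /Phi lfunE_gen // lfunE_gen.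
have ker0 : (fullv :&: lker Phi = 0)%VS.
  apply/eqP; rewrite -subv0; apply/subvP => x /memv_capP [_].
  rewrite memv_ker memv0 => /eqP H; apply/eqP/nd => y.
  by rewrite -PhiE H zero_lfunE.
have imgf : (Phi @: fullv)%VS = fullv.
  apply/eqP; rewrite eqEdim subvf limg_dim_eq // !dimvf.
  by rewrite /dim /= muln1.
have : linfun (f : W -> R^o) \in (Phi @: fullv)%VS by rewrite imgf memvf.
case/memv_imgP => x _ Hx; exists x => y.
by rewrite -PhiE -Hx lfunE_gen.
Qed.

Lemma sum_delta (m : nat) (F : 'I_m -> R) j :
  \sum_(i < m) F i * (i == j)%:R = F j.
Proof.
rewrite (bigD1 j) //= eqxx mulr1 big1 ?addr0 // => i /negbTE ->.
by rewrite mulr0.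
Qed.

Lemma span_dual m (w w' : 'I_m -> W) :
  (forall i j, h (w i) (w' j) = (i == j)%:R) ->
  (forall y, y \in (\sum_(i < m) <[w i]>)%VS -> y = \sum_i h y (w' i) *: w i) /\
  \dim (\sum_(i < m) <[w i]>)%VS = m.
Proof.
move=> Hd.
have Hexp y : y \in (\sum_(i < m) <[w i]>)%VS -> y = \sum_i h y (w' i) *: w i.
  case/memv_sumP => vs Hvs ->.
  have Hk i : vs i = h (vs i) (w' i) *: w i.
    have /vlineP [k ->] := Hvs i isT.
    by rewrite hZl Hd eqxx mulr1.
  apply: eq_bigr => j _; rewrite hsuml.
  rewrite (eq_bigr (fun i => h (vs i) (w' i) * (i == j)%:R)); last first.
    by move=> i _; rewrite {1}Hk hZl Hd.
  by rewrite sum_delta -Hk.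
split=> //.
have Tlin : forall a (c d : 'rV[R]_m), \sum_i (a *: c + d) 0 i *: w i =
   a *: \sum_i c 0 i *: w i + \sum_i d 0 i *: w i.
  move=> a c d; rewrite scaler_sumr -big_split; apply: eq_bigr => i _.
  by rewrite !mxE scalerDl scalerA.
pose T : 'Hom('rV[R]_m, W) := linfun (fun c : 'rV[R]_m => \sum_i c 0 i *: w i).
have TE c : T c = \sum_i c 0 i *: w i by rewrite /T lfunE_gen.
have ker0 : (fullv :&: lker T = 0)%VS.
  apply/eqP; rewrite -subv0; apply/subvP => c /memv_capP [_].
  rewrite memv_ker memv0 TE => /eqP H; apply/eqP/rowP => j; rewrite mxE.
  have := congr1 (fun z => h z (w' j)) H; rewrite /= h0l hsuml => <-.
  rewrite (eq_bigr (fun i => c 0 i * (i == j)%:R)) ?sum_delta // => i _.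
  by rewrite hZl Hd.
have img : (T @: fullv)%VS = (\sum_(i < m) <[w i]>)%VS.
  apply/eqP; rewrite eqEsubv; apply/andP; split.
    apply/subvP => y /memv_imgP [c _ ->]; rewrite TE.
    by apply: memv_sumr => i _; apply: memvZ; apply: memv_line.
  apply/subvP => y Hy; rewrite (Hexp y Hy).
  have -> : \sum_i h y (w' i) *: w i = T (\row_i h y (w' i)).
    by rewrite TE; apply: eq_bigr => i _; rewrite mxE.
  by apply: memv_img; apply: memvf.
by rewrite -img limg_dim_eq // dimvf /dim /= mul1n.
Qed.

Lemma orth_basis (U : {vspace W}) :
  (forall a, a \in U -> a != 0 -> 0 < h a a) ->
  exists X : seq W, (forall y, y \in X -> y \in U /\ 0 < h y y) /\
    (forall x, x \in U -> x = \sum_(y <- X) (h x y / h y y) *: y).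
Proof.
move: {2}(\dim U) (leqnn (\dim U)) => n; elim: n U => [|n IH] U.
  rewrite leqn0 dimv_eq0 => /eqP -> _; exists [::]; split=> // x.
  by rewrite memv0 big_nil => /eqP.
move=> HdU pd; have [U0|Unz] := eqVneq U 0%VS.
  exists [::]; split=> [y|x]; first by rewrite in_nil.
  by rewrite U0 memv0 big_nil => /eqP.
set e := vpick U; have Ue : e \in U := memv_pick U.
have enz : e != 0 by rewrite vpick0.
have pe := pd e Ue enz.
set U' := (U :&: orthv <[e]>)%VS.
have sub : (U' <= U)%VS by apply: capvSl.
have eU' : e \notin U'.
  apply/negP => /memv_capP [_ /memv_orth H].
  by move: pe; rewrite H ?memv_line // ltxx.
have ltd : (\dim U' < \dim U)%N.
  have [le eqi] := dimv_leqif_eq sub.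
  rewrite ltn_neqAle le eqi andbT; apply/negP => /eqP E'.
  by move: eU'; rewrite E' Ue.
have [X [HX1 HX2]] : exists X : seq W, (forall y, y \in X -> y \in U' /\ 0 < h y y) /\
    (forall x, x \in U' -> x = \sum_(y <- X) (h x y / h y y) *: y).
  apply: IH; first by rewrite -ltnS; apply: leq_trans ltd HdU.
  by move=> a /memv_capP [Ua _]; apply: pd.
exists (e :: X); split.
  move=> y; rewrite in_cons => /orP [/eqP -> //|/HX1 [/memv_capP [Uy _] py]].
  by split.
move=> x Ux; rewrite big_cons.
set c := h x e / h e e.
have Hx' : x - c *: e \in U'.
  apply/memv_capP; split; first by apply: memvB => //; apply: memvZ.
  apply/memv_orth => y /vlineP [k ->].
  rewrite hZr hBl hZl /c mulfVK ?subrr ?mulr0 //.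
  by rewrite lt0r_neq0.
have := HX2 _ Hx'.
have -> : \sum_(y <- X) (h (x - c *: e) y / h y y) *: y =
          \sum_(y <- X) (h x y / h y y) *: y.
  apply: eq_big_seq => y /HX1 [/memv_capP [_ /memv_orth Hy] _].
  by rewrite hBl hZl (hsym e) Hy ?memv_line // mulr0 subr0.
by move=> <-; rewrite addrC subrK.
Qed.
Section HSsec.
Variables (U : {vspace W}) (X : seq W).
Hypothesis pdU : forall a, a \in U -> a != 0 -> 0 < h a a.
Hypothesis HX1 : forall y, y \in X -> y \in U /\ 0 < h y y.
Hypothesis HX2 : forall x, x \in U -> x = \sum_(y <- X) (h x y / h y y) *: y.

Lemma parseval x y : x \in U -> h x y = \sum_(z <- X) h x z * h z y / h z z.
Proof.
move=> Ux; rewrite {1}(HX2 Ux) hsuml; apply: eq_bigr => z _.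
by rewrite hZl mulrAC.
Qed.

Definition HSf (A C : W -> W) := \sum_(z <- X) h (A z) (C z) / h z z.

Lemma HS_inv (S A C : W -> W) :
  (forall z, z \in U -> S z \in U) -> (forall z, z \in U -> A z \in U) ->
  (forall z, z \in U -> C z \in U) ->
  (forall x y, x \in U -> y \in U -> h (S x) y = - h x (S y)) ->
  (forall x y, x \in U -> y \in U -> h (A x) y = - h x (A y)) ->
  (forall x y, x \in U -> y \in U -> h (C x) y = - h x (C y)) ->
  HSf (fun z => S (A z) - A (S z)) C = - HSf A (fun z => S (C z) - C (S z)).
Proof.
move=> SU AU CU Ssk Ask Csk.
have XU z : z \in X -> z \in U by case/HX1.
have T1 : \sum_(y <- X) h (S (A y)) (C y) / h y y =
          - \sum_(y <- X) h (A y) (S (C y)) / h y y.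
  rewrite -sumrN; apply: eq_big_seq => y Xy.
  by rewrite Ssk ?AU ?CU ?XU // mulNr.
have T2 : \sum_(y <- X) h (A (S y)) (C y) / h y y =
          - \sum_(y <- X) h (A y) (C (S y)) / h y y.
  transitivity (\sum_(y <- X) \sum_(z <- X)
                  (h y (S z) * h (C (A z)) y / h y y) / h z z).
    apply: eq_big_seq => y Xy.
    rewrite Ask ?SU ?CU ?XU // (parseval _ (SU _ (XU _ Xy))) mulNr mulr_suml -sumrN.
    apply: eq_big_seq => z Xz.
    have e1 : h (S y) z = - h y (S z) by rewrite Ssk ?XU.
    have e2 : h z (A (C y)) = h (C (A z)) y.
      by rewrite Csk ?AU ?XU // hsym Ask ?CU ?XU // hsym.
    rewrite e1 e2; field.
    by apply/andP; split; apply: lt0r_neq0; [case: (HX1 Xz)|case: (HX1 Xy)].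
  rewrite exchange_big -sumrN; apply: eq_big_seq => z Xz.
  rewrite -mulr_suml.
  have -> : \sum_(y <- X) h y (S z) * h (C (A z)) y / h y y = h (C (A z)) (S z).
    rewrite (parseval _ (CU _ (AU _ (XU _ Xz)))); apply: eq_bigr => y _.
    by rewrite [h y (S z) * _]mulrC.
  by rewrite Csk ?AU ?SU ?XU // mulNr.
rewrite /HSf.
rewrite (eq_bigr (fun y => h (S (A y)) (C y) / h y y - h (A (S y)) (C y) / h y y)); last first.
  by move=> y _; rewrite hBl mulrBl.
rewrite big_split /= T1 sumrN T2 opprK -sumrN -big_split /=.
by rewrite -sumrN; apply: eq_bigr => y _; rewrite hBr mulrBl opprB addrC.
Qed.

Lemma HS_ge0 (A : W -> W) : (forall z, z \in U -> A z \in U) -> 0 <= HSf A A.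
Proof.
move=> AU; rewrite /HSf big_seq; apply: sumr_ge0 => y Xy; have [Uy py] := HX1 Xy.
apply: divr_ge0; last exact: ltW.
have [->|nz] := eqVneq (A y) 0; first by rewrite h0l.
by apply: ltW; apply: pdU => //; apply: AU.
Qed.

Lemma HS_zero (A : 'End(W)) : (forall z, z \in U -> A z \in U) ->
  HSf A A = 0 -> forall x, x \in U -> A x = 0.
Proof.
move=> AU H0.
have Hz z : z \in X -> A z = 0.
  move=> Xz; have [Uz pz] := HX1 Xz.
  move/eqP: H0; rewrite /HSf big_seq_cond psumr_eq0; last first.
    move=> y /andP [Xy _]; have [Uy py] := HX1 Xy.
    apply: divr_ge0; last exact: ltW.
    have [->|nz] := eqVneq (A y) 0; first by rewrite h0l.
    by apply: ltW; apply: pdU => //; apply: AU.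
  move/allP => /(_ z Xz); rewrite Xz andbT /= mulf_eq0 invr_eq0 (negbTE (lt0r_neq0 pz)) orbF.
  move=> /eqP hA; apply/eqP/negPn/negP => nz.
  by have := pdU (AU _ Uz) nz; rewrite hA ltxx.
move=> x Ux; rewrite (HX2 Ux) linear_sum big1_seq // => z /andP [_ Xz].
by rewrite linearZ /= Hz // scaler0.
Qed.

End HSsec.
End Gen.



Section Main.
Variables (R : realType) (V : vectType R) (br : V -> V -> V) (B : V -> V -> R).
Hypothesis Hlie : is_lie_bracket br.
Hypothesis Hmet : is_metric br B.

Lemma BL a x y z : B (a *: x + y) z = a * B x z + B y z. Proof. by case: Hmet. Qed.
Lemma Bsym x y : B x y = B y x. Proof. by case: Hmet. Qed.
Lemma Bnd x : (forall y, B x y = 0) -> x = 0. Proof. by case: Hmet => _ _ H _; apply: H. Qed.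
Lemma Binv x y z : B (br x y) z = - B y (br x z). Proof. by case: Hmet. Qed.
Lemma brL1 a x y z : br (a *: x + y) z = a *: br x z + br y z. Proof. by case: Hlie. Qed.
Lemma brL2 a x y z : br z (a *: x + y) = a *: br z x + br z y. Proof. by case: Hlie. Qed.
Lemma bralt x : br x x = 0. Proof. by case: Hlie. Qed.
Lemma brJac x y z : br x (br y z) + br y (br z x) + br z (br x y) = 0. Proof. by case: Hlie. Qed.

Definition B0l := h0l BL. Definition BDl := hDl BL. Definition BZl := hZl BL.
Definition BNl := hNl BL. Definition BBl := hBl BL. Definition Bsuml := hsuml BL.
Definition B0r := h0r BL Bsym. Definition BDr := hDr BL Bsym. Definition BZr := hZr BL Bsym.
Definition BNr := hNr BL Bsym. Definition BBr := hBr BL Bsym. Definition Bsumr := hsumr BL Bsym.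

Lemma br0l z : br 0 z = 0.
Proof. have H := brL1 1 0 0 z; rewrite !scale1r !addr0 in H. by apply: (addrI (br 0 z)); rewrite addr0 -H. Qed.
Lemma brDl x y z : br (x + y) z = br x z + br y z.
Proof. by have := brL1 1 x y z; rewrite !scale1r. Qed.
Lemma brZl a x z : br (a *: x) z = a *: br x z.
Proof. by have := brL1 a x 0 z; rewrite !addr0 br0l addr0. Qed.
Lemma brNl x z : br (- x) z = - br x z.
Proof. by rewrite -scaleN1r brZl scaleN1r. Qed.
Lemma brBl x y z : br (x - y) z = br x z - br y z.
Proof. by rewrite brDl brNl. Qed.
Lemma brsuml (I : Type) (s : seq I) (P : pred I) (F : I -> V) z :
  br (\sum_(i <- s | P i) F i) z = \sum_(i <- s | P i) br (F i) z.
Proof. by elim/big_rec2: _ => [|i a b _ <-]; rewrite ?br0l ?brDl. Qed.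
Lemma br0r z : br z 0 = 0.
Proof. have H := brL2 1 0 0 z; rewrite !scale1r !addr0 in H. by apply: (addrI (br z 0)); rewrite addr0 -H. Qed.
Lemma brDr x y z : br z (x + y) = br z x + br z y.
Proof. by have := brL2 1 x y z; rewrite !scale1r. Qed.
Lemma brZr a x z : br z (a *: x) = a *: br z x.
Proof. by have := brL2 a x 0 z; rewrite !addr0 br0r addr0. Qed.
Lemma brNr x z : br z (- x) = - br z x.
Proof. by rewrite -scaleN1r brZr scaleN1r. Qed.
Lemma brBr x y z : br z (x - y) = br z x - br z y.
Proof. by rewrite brDr brNr. Qed.
Lemma brsumr (I : Type) (s : seq I) (P : pred I) (F : I -> V) z :
  br z (\sum_(i <- s | P i) F i) = \sum_(i <- s | P i) br z (F i).
Proof. by elim/big_rec2: _ => [|i a b _ <-]; rewrite ?br0r ?brDr. Qed.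
Lemma brA x y : br x y = - br y x.
Proof.
have := bralt (x + y); rewrite brDl !brDr !bralt add0r addr0.
by move/eqP; rewrite addr_eq0 => /eqP.
Qed.
Lemma brJacD a x y : br a (br x y) = br (br a x) y + br x (br a y).
Proof.
have := brJac a x y; rewrite (brA y a) brNr (brA y (br a x)).
by move/eqP; rewrite -addrA -opprD addr_eq0 opprK => /eqP ->; rewrite addrC.
Qed.

Lemma aux_ineq (a b t : R) : 0 <= a -> 0 < b ^+ 2 -> t * (a + 1) = - b ->
  0 <= 0 + t * b + (t * b + t * (t * a)) -> False.
Proof. move=> Ha Hb Ht H; nra. Qed.

Section Struct.
Variables (r : nat) (u v : 'I_r -> V).
Hypothesis Huv : forall i j, B (u i) (v j) = (i == j)%:R.
Hypothesis Huu : forall i j, B (u i) (u j) = 0.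
Hypothesis Hvv : forall i j, B (v i) (v j) = 0.
Hypothesis Hvc : forall i y, br (v i) y = 0.
Hypothesis Hmax : forall U, neg_definite B U -> (\dim U <= r)%N.
Hypothesis Hind : indecomposable br B.
Hypothesis Hr : (0 < r)%N.

Definition Ev := (orthF B u :&: orthF B v)%VS.
Definition cu x := \sum_i B x (v i) *: u i.
Definition cv x := \sum_i B x (u i) *: v i.
Definition piE x := x - (cu x + cv x).

Lemma memE x : x \in Ev <-> (forall i, B x (u i) = 0) /\ (forall i, B x (v i) = 0).
Proof.
rewrite /Ev memv_cap; split.
  by case/andP => /(memv_orthF BL) H1 /(memv_orthF BL) H2.
by case=> H1 H2; apply/andP; split; apply/(memv_orthF BL).
Qed.

Lemma Bu_v (a : 'I_r -> R) j : B (\sum_i a i *: u i) (v j) = a j.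
Proof.
rewrite Bsuml (eq_bigr (fun i => a i * (i == j)%:R)) ?sum_delta // => i _.
by rewrite BZl Huv.
Qed.
Lemma Bu_u (a : 'I_r -> R) j : B (\sum_i a i *: u i) (u j) = 0.
Proof. by rewrite Bsuml big1 // => i _; rewrite BZl Huu mulr0. Qed.
Lemma Bv_u (a : 'I_r -> R) j : B (\sum_i a i *: v i) (u j) = a j.
Proof.
rewrite Bsuml (eq_bigr (fun i => a i * (i == j)%:R)) ?sum_delta // => i _.
by rewrite BZl Bsym Huv eq_sym.
Qed.
Lemma Bv_v (a : 'I_r -> R) j : B (\sum_i a i *: v i) (v j) = 0.
Proof. by rewrite Bsuml big1 // => i _; rewrite BZl Hvv mulr0. Qed.

Lemma piE_in x : piE x \in Ev.
Proof.
apply/memE; split=> j; rewrite /piE BBl BDl /cu /cv.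
  by rewrite Bu_u Bv_u add0r subrr.
by rewrite Bu_v Bv_v addr0 subrr.
Qed.

Lemma piE_id x : x \in Ev -> piE x = x.
Proof.
case/memE => H1 H2; rewrite /piE /cu /cv !big1 ?addr0 ?subr0 // => i _.
  by rewrite H1 scale0r.
by rewrite H2 scale0r.
Qed.

Lemma decomp x : x = piE x + (cu x + cv x).
Proof. by rewrite /piE subrK. Qed.

Lemma cu_lin a x y : cu (a *: x + y) = a *: cu x + cu y.
Proof.
rewrite /cu scaler_sumr -big_split; apply: eq_bigr => i _.
by rewrite BL scalerDl scalerA.
Qed.
Lemma cv_lin a x y : cv (a *: x + y) = a *: cv x + cv y.
Proof.
rewrite /cv scaler_sumr -big_split; apply: eq_bigr => i _.
by rewrite BL scalerDl scalerA.
Qed.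
Lemma piE_lin a x y : piE (a *: x + y) = a *: piE x + piE y.
Proof.
rewrite /piE cu_lin cv_lin addrACA scalerBr scalerDr opprD addrACA.
by [].
Qed.
Lemma piE0 : piE 0 = 0.
Proof. have H := piE_lin 1 0 0; rewrite !scale1r !addr0 in H. by apply: (addrI (piE 0)); rewrite addr0 -H. Qed.
Lemma piED x y : piE (x + y) = piE x + piE y.
Proof. by have := piE_lin 1 x y; rewrite !scale1r. Qed.
Lemma piEZ a x : piE (a *: x) = a *: piE x.
Proof. by have := piE_lin a x 0; rewrite !addr0 piE0 addr0. Qed.
Lemma piEN x : piE (- x) = - piE x.
Proof. by rewrite -scaleN1r piEZ scaleN1r. Qed.
Lemma piEB x y : piE (x - y) = piE x - piE y.
Proof. by rewrite piED piEN. Qed.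
Lemma piE_sum (I : Type) (s : seq I) (P : pred I) (F : I -> V) :
  piE (\sum_(i <- s | P i) F i) = \sum_(i <- s | P i) piE (F i).
Proof. by elim/big_rec2: _ => [|i a b _ <-]; rewrite ?piE0 ?piED. Qed.
Lemma piE_idem x : piE (piE x) = piE x.
Proof. by rewrite piE_id // piE_in. Qed.

Lemma B_cu_E x y : y \in Ev -> B (cu x) y = 0.
Proof. case/memE => H1 _; rewrite Bsuml big1 // => i _; by rewrite BZl (Bsym (u i)) H1 mulr0. Qed.
Lemma B_cv_E x y : y \in Ev -> B (cv x) y = 0.
Proof. case/memE => _ H2; rewrite Bsuml big1 // => i _; by rewrite BZl (Bsym (v i)) H2 mulr0. Qed.

Lemma B_piE x y : y \in Ev -> B (piE x) y = B x y.
Proof. by move=> Ey; rewrite /piE BBl BDl B_cu_E // B_cv_E // addr0 subr0. Qed.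

Lemma cv_central x y : br (cv x) y = 0.
Proof. by rewrite /cv brsuml big1 // => i _; rewrite brZl Hvc scaler0. Qed.
Lemma cv_central_r x y : br y (cv x) = 0.
Proof. by rewrite brA cv_central oppr0. Qed.

Lemma Bbr_v a y k : B (br a y) (v k) = 0.
Proof. by rewrite Binv (brA a) Hvc oppr0 B0r oppr0. Qed.

Lemma cu_br a y : cu (br a y) = 0.
Proof. by rewrite /cu big1 // => i _; rewrite Bbr_v scale0r. Qed.

Lemma br_dec a y : br a y = piE (br a y) + cv (br a y).
Proof. by rewrite {1}(decomp (br a y)) cu_br add0r. Qed.

Definition S := (\sum_(i < r) (<[u i]> + <[v i]>))%VS.

Lemma S_E : (S + Ev)%VS = fullv /\ \dim {:V} = (2 * r + \dim Ev)%N.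
Proof.
pose w (k : 'I_(r + r)) := match split k with inl i => u i | inr i => v i end.
pose w' (k : 'I_(r + r)) := match split k with inl i => v i | inr i => u i end.
have Hd : forall k l, B (w k) (w' l) = (k == l)%:R.
  move=> k l; rewrite /w /w'.
  case: (split_ordP k) => i ->; case: (split_ordP l) => j ->.
  - by rewrite Huv eq_lshift.
  - by rewrite Huu eq_lrshift.
  - by rewrite Hvv eq_rlshift.
  - by rewrite Bsym Huv eq_rshift eq_sym.
have [Hexp Hdim] := span_dual BL Hd.
have HS : (\sum_(k < r + r) <[w k]>)%VS = S.
  rewrite big_split_ord /S big_split /=; congr (_ + _)%VS; apply: eq_bigr => i _.
    by rewrite /w (unsplitK (inl _ i)).
  by rewrite /w (unsplitK (inr _ i)).
rewrite HS in Hexp Hdim.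
have cap0 : (S :&: Ev = 0)%VS.
  apply/eqP; rewrite -subv0; apply/subvP => y /memv_capP [Sy Ey].
  rewrite memv0 (Hexp y Sy) big1 // => k _.
  case/memE: Ey => H1 H2; rewrite /w'.
  by case: (split k) => i; rewrite ?H1 ?H2 scale0r.
have full : (S + Ev)%VS = fullv.
  apply/eqP; rewrite eqEsubv subvf /=; apply/subvP => x _.
  rewrite (decomp x) addrC; apply: memv_add; last exact: piE_in.
  rewrite /cu /cv -big_split /=; apply: memv_sumr => i _.
  by apply: memv_add; apply: memvZ; apply: memv_line.
split=> //.
by rewrite -full dimv_disjoint_sum // Hdim mul2n addnn.
Qed.

Lemma Bxx_sum n0 k y : B n0 y = 0 ->
  B (n0 + k *: y) (n0 + k *: y) = B n0 n0 + k ^+ 2 * B y y.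
Proof.
move=> H; rewrite !BDl !BDr !BZl !BZr H (Bsym y n0) H.
by rewrite !mulr0 !addr0 add0r mulrA expr2.
Qed.

Lemma GL (N : {vspace V}) : neg_definite B N -> \dim N = r ->
  forall y, (forall n, n \in N -> B y n = 0) -> y != 0 -> 0 < B y y.
Proof.
move=> nd dN.
have hlin' : forall a x y z, - B (a *: x + y) z = a * (- B x z) + - B y z.
  by move=> a x y z; rewrite BL opprD mulrN.
have pd' : forall a, a \in N -> a != 0 -> 0 < - B a a.
  by move=> a Na nz; rewrite oppr_gt0; apply: nd.
have decN z : exists2 n0, n0 \in N & forall n', n' \in N -> B (z - n0) n' = 0.
  have hsym' : forall x y, - B x y = - B y x by move=> x y; rewrite Bsym.
  have [n0 Nn0 H] := GP hlin' hsym' pd' z; exists n0 => // n' Nn'.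
  by apply/eqP; rewrite -oppr_eq0 H.
have semi : forall y, (forall n, n \in N -> B y n = 0) -> 0 <= B y y.
  move=> y Hy; rewrite leNgt; apply/negP => neg.
  have ynz : y != 0 by apply/eqP => y0; move: neg; rewrite y0 B0l ltxx.
  have capN : (N :&: <[y]> = 0)%VS.
    apply/eqP; rewrite -subv0; apply/subvP => z /memv_capP [Nz /vlineP [k zk]].
    rewrite memv0 zk; have := Hy _ Nz; rewrite zk BZr => /eqP.
    rewrite mulf_eq0 => /orP [/eqP -> | /eqP e]; first by rewrite scale0r.
    by move: neg; rewrite e ltxx.
  suff ndU : neg_definite B (N + <[y]>)%VS.
    by have := Hmax ndU; rewrite dimv_disjoint_sum // dN dim_vline ynz addn1 ltnn.
  move=> x /memv_addP [n0 Nn0 [z /vlineP [k ->] ->]] xnz.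
  rewrite Bxx_sum; last by rewrite Bsym Hy.
  have [n00|n0nz] := eqVneq n0 0.
    rewrite n00 B0l add0r; rewrite n00 add0r in xnz.
    have knz : k != 0 by apply: contraNneq xnz => ->; rewrite scale0r.
    have k2 : 0 < k ^+ 2 by rewrite lt_def sqrf_eq0 knz sqr_ge0.
    nra.
  have := nd _ Nn0 n0nz.
  have : 0 <= k ^+ 2 by apply: sqr_ge0.
  by move=> k2 Bn; nra.
move=> y Hy ynz.
have Byy : B y y != 0.
  apply/eqP => B0; move/eqP: ynz; apply; apply: Bnd => z.
  have [n0 Nn0 Hp] := decN z; set p := z - n0 in Hp.
  have -> : z = n0 + p by rewrite /p addrC subrK.
  rewrite BDr Hy // add0r.
  have Hpp : 0 <= B p p by apply: semi.
  apply/eqP/negPn/negP => bnz.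
  set b := B y p in bnz; set a := B p p in Hpp.
  set t := - b / (a + 1).
  have a1 : 0 < a + 1 by lra.
  have ta : t * (a + 1) = - b by rewrite /t mulfVK // lt0r_neq0.
  have Hw : forall n, n \in N -> B (y + t *: p) n = 0.
    by move=> n Nn; rewrite BDl BZl Hy // Hp // mulr0 addr0.
  have := semi _ Hw.
  rewrite BDl !BDr !BZl !BZr B0 (Bsym p y) -/b -/a => H.
  have b2 : 0 < b ^+ 2 by rewrite lt_def sqrf_eq0 bnz sqr_ge0.
  by apply: (aux_ineq Hpp b2 ta H).
by rewrite lt_def Byy semi.
Qed.

Lemma iso_bound (N : {vspace V}) : neg_definite B N -> \dim N = r ->
  forall W : {vspace V}, (forall y, y \in W -> B y y = 0) -> (\dim W <= r)%N.
Proof.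
move=> nd dN W HW.
have cap0 : (W :&: orthv B N = 0)%VS.
  apply/eqP; rewrite -subv0; apply/subvP => y /memv_capP [Wy /(memv_orth BL Bsym) Oy].
  rewrite memv0; apply/negPn/negP => ynz.
  by have := GL nd dN Oy ynz; rewrite HW // ltxx.
have := @dim_orthv _ _ B N; rewrite dN.
have := dimvS (subvf (W + orthv B N)%VS); rewrite dimv_disjoint_sum //.
move=> H1 H2; have := leq_trans H1 H2.
by rewrite addnC leq_add2l.
Qed.

Lemma Nprime : exists N : {vspace V}, [/\ neg_definite B N, \dim N = r &
  forall e, e \in Ev -> forall n, n \in N -> B e n = 0].
Proof.
pose w i := u i - 2^-1 *: v i.
pose w' i := - w i.
have Hd : forall i j, B (w i) (w' j) = (i == j)%:R.
  move=> i j; rewrite /w' /w BNr !BBl !BBr !BZl !BZr Huu Huv Hvv (Bsym (v i)) Huv.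
  by rewrite [(j == i)]eq_sym; field.
have [Hexp Hdim] := span_dual BL Hd.
exists (\sum_(i < r) <[w i]>)%VS; split=> //.
  move=> y Ny ynz.
  have Hyy : B y y = - \sum_i B y (w' i) ^+ 2.
    rewrite {1}(Hexp y Ny) Bsuml -sumrN; apply: eq_bigr => i _.
    by rewrite BZl (Bsym (w i)) /w' !BNr sqrrN expr2 mulNr.
  rewrite Hyy oppr_lt0 lt_def sumr_ge0 ?andbT => [|i _]; last exact: sqr_ge0.
  apply/eqP => H0; move/eqP: ynz; apply.
  have H1 := psumr_eq0P (fun i _ => sqr_ge0 (B y (w' i))) H0.
  rewrite (Hexp y Ny) big1 // => i _.
  by have /eqP := H1 i isT; rewrite sqrf_eq0 => /eqP ->; rewrite scale0r.
move=> e Ee n Nn; rewrite (Hexp n Nn) Bsumr big1 // => i _.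
case/memE: Ee => H1 H2.
by rewrite BZr /w BBr BZr H1 H2 mulr0 subr0 mulr0.
Qed.

Lemma E_pos : pos_definite B Ev.
Proof.
have [N [nd dN HN]] := Nprime.
move=> e Ee enz; apply: (GL nd dN) => // n Nn; exact: HN.
Qed.

Lemma split_contra (I : {vspace V}) (eps : R) : (eps = 1 \/ eps = -1) ->
  (forall a, a \in I -> a != 0 -> 0 < eps * B a a) -> I != 0%VS ->
  (exists y, y != 0 /\ forall a, a \in I -> B y a = 0) ->
  (forall a x, x \in I -> br a x \in I) -> False.
Proof.
move=> Heps pd Inz [y0 [y0nz Hy0]] Iid.
have epsnz : eps != 0 by case: Heps => ->; rewrite ?oppr_eq0 oner_eq0.
have hlin' : forall a x y z, eps * B (a *: x + y) z = a * (eps * B x z) + eps * B y z.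
  by move=> a x y z; rewrite BL mulrDr mulrCA.
have hsym' : forall x y, eps * B x y = eps * B y x by move=> x y; rewrite Bsym.
set J := orthv B I.
have memJ y : y \in J <-> forall a, a \in I -> B y a = 0 := memv_orth BL Bsym I y.
have cap0 : (I :&: J = 0)%VS.
  apply/eqP; rewrite -subv0; apply/subvP => z /memv_capP [Iz /memJ Jz].
  rewrite memv0; apply/negPn/negP => znz.
  by have := pd z Iz znz; rewrite Jz // mulr0 ltxx.
have Jid a y : y \in J -> br a y \in J.
  move/memJ => Hy; apply/memJ => i Ii; rewrite Binv Hy ?oppr0 //; exact: Iid.
apply: Hind; exists I, J.
split; first exact: Inz.
split.
  apply/negP => /eqP J0; move: y0nz; have : y0 \in J by apply/memJ.
  by rewrite J0 memv0 => ->.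
split.
  apply/eqP; rewrite eqEsubv subvf /=; apply/subvP => w _.
  have [a Ia Ha] := GP hlin' hsym' pd w.
  rewrite -(subrK a w) addrC; apply: memv_add => //; apply/memJ => a' Ia'.
  by have /eqP := Ha a' Ia'; rewrite mulf_eq0 (negbTE epsnz) => /eqP.
split; first exact/directv_addP.
split.
  move=> x y Ix Jy; split; first by rewrite Bsym; move/memJ: Jy; apply.
  apply/eqP; rewrite -memv0 -cap0; apply/memv_capP; split.
    by rewrite brA memvN; apply: Iid.
  by apply: Jid.
split; first by move=> x y _ Iy; apply: Iid.
by move=> x y _ Jy; apply: Jid.
Qed.

Definition Zv := (\sum_(i < r) <[v i]>)%VS.

Lemma Zv_prop : (forall y, y \in Zv -> y = \sum_i B y (u i) *: v i) /\ \dim Zv = r.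
Proof.
rewrite /Zv; apply: (span_dual BL) => i j; by rewrite Bsym Huv eq_sym.
Qed.

Lemma Zv_central y z : y \in Zv -> br y z = 0.
Proof.
case: Zv_prop => Hexp _ /Hexp ->; rewrite brsuml big1 // => i _.
by rewrite brZl Hvc scaler0.
Qed.

Lemma Zv_iso y z : y \in Zv -> z \in Zv -> B y z = 0.
Proof.
case: Zv_prop => Hexp _ /Hexp -> Hz; rewrite Bsuml big1 // => i _.
rewrite BZl (Hexp z Hz) Bsumr big1 ?mulr0 // => j _.
by rewrite BZr Hvv mulr0.
Qed.

Lemma centre_char x : central br x <-> x \in Zv.
Proof.
split; last by move=> Zx y; apply: Zv_central.
move=> cx; apply/negPn/negP => nZ.
have [_ dZ] := Zv_prop.
have [N [nd dN _]] := Nprime.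
set W := (Zv + <[x]>)%VS.
have capW : (Zv :&: <[x]> = 0)%VS.
  apply/eqP; rewrite -subv0; apply/subvP => z /memv_capP [Zz /vlineP [k zk]].
  rewrite memv0 zk; have [->|knz] := eqVneq k 0; first by rewrite scale0r.
  move: nZ; have -> : x = k^-1 *: z by rewrite zk scalerA mulVf // scale1r.
  by rewrite memvZ.
have xnz : x != 0 by apply: contraNneq nZ => ->; apply: mem0v.
have dW : \dim W = r.+1 by rewrite dimv_disjoint_sum // dZ dim_vline xnz addn1.
have Wc : forall y z, y \in W -> br y z = 0.
  move=> y z /memv_addP [a Za [b /vlineP [k ->] ->]].
  by rewrite brDl brZl Zv_central // cx scaler0 addr0.
have [c [Wc' Bc]] : exists c, c \in W /\ B c c != 0.
  apply: NNPP => H.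
  have iso : forall y, y \in W -> B y y = 0.
    by move=> y Wy; apply/eqP/negPn/negP => Hy; apply: H; exists y.
  by have := iso_bound nd dN iso; rewrite dW ltnn.
pose eps : R := if 0 < B c c then 1 else -1.
have cnz : c != 0 by apply: contraNneq Bc => ->; rewrite B0l.
apply: (@split_contra <[c]> eps).
- by rewrite /eps; case: ifP; [left|right].
- move=> a /vlineP [k ->] anz.
  have knz : k != 0 by apply: contraNneq anz => ->; rewrite scale0r.
  have k2 : 0 < k ^+ 2 by rewrite lt_def sqrf_eq0 knz sqr_ge0.
  rewrite BZl BZr mulrA -expr2 /eps; case: ifP => Hc.
    by rewrite mul1r mulr_gt0.
  have : B c c < 0 by rewrite lt_def eq_sym Bc /= leNgt Hc.
  by move=> Hc'; rewrite mulN1r oppr_gt0 pmulr_rlt0.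
- by rewrite -dimv_eq0 dim_vline cnz.
- pose i0 := Ordinal Hr.
  exists (v i0 - (B (v i0) c / B c c) *: c); split.
    set t := B (v i0) c / B c c.
    apply/eqP => H0.
    have vc : v i0 = t *: c by apply/eqP; rewrite -subr_eq0 H0.
    have t0 : t = 0.
      have := Hvv i0 i0; rewrite {1 2}vc BZl BZr mulrA => /eqP.
      rewrite !mulf_eq0 invr_eq0 (negbTE Bc) !orbF orbb => /eqP H1.
      by rewrite /t H1 mul0r.
    by have := Huv i0 i0; rewrite vc t0 scale0r B0r eqxx => /eqP; rewrite eq_sym oner_eq0.
  move=> a /vlineP [k ->]; rewrite BZr BBl BZl mulfVK // subrr mulr0 //.
- move=> a y /vlineP [k ->]; rewrite brZr brA Wc // oppr0 scaler0; exact: mem0v.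
Qed.

Definition adE a : 'End(V) := linfun (fun y => piE (br a (piE y))).

Lemma adE_lin_fun a c x y :
  piE (br a (piE (c *: x + y))) = c *: piE (br a (piE x)) + piE (br a (piE y)).
Proof. by rewrite piE_lin brL2 piE_lin. Qed.
Lemma adEE a y : adE a y = piE (br a (piE y)).
Proof. by rewrite /adE lfunE_gen // => c x z; apply: adE_lin_fun. Qed.
Lemma adE_E a y : y \in Ev -> adE a y = piE (br a y).
Proof. by move=> Ey; rewrite adEE (piE_id Ey). Qed.
Lemma adE_in a y : adE a y \in Ev.
Proof. by rewrite adEE piE_in. Qed.
Lemma B_piE_r x z : x \in Ev -> B x (piE z) = B x z.
Proof. by move=> Ex; rewrite Bsym B_piE // Bsym. Qed.
Lemma adE_skew a x y : x \in Ev -> y \in Ev -> B (adE a x) y = - B x (adE a y).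
Proof. by move=> Ex Ey; rewrite !adE_E // B_piE // Binv B_piE_r. Qed.
Lemma br_E a x : x \in Ev -> br a x = adE a x + cv (br a x).
Proof. by move=> Ex; rewrite adE_E // {1}br_dec. Qed.
Lemma adE_lin_a c a b : adE (c *: a + b) = c *: adE a + adE b.
Proof. by apply/lfunP => y; rewrite add_lfunE scale_lfunE !adEE brL1 piE_lin. Qed.
Lemma adE_sub a b : adE (a - b) = adE a - adE b.
Proof. by have := adE_lin_a (-1) b a; rewrite !scaleN1r addrC => ->; rewrite addrC. Qed.
Lemma adE_der a x y : x \in Ev -> y \in Ev ->
  adE a (piE (br x y)) = piE (br (adE a x) y) + piE (br x (adE a y)).
Proof.
move=> Ex Ey; rewrite adE_E ?piE_in //.
have -> : br a (piE (br x y)) = br a (br x y).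
  by rewrite {2}(br_dec x y) brDr cv_central_r addr0.
rewrite brJacD (br_E a Ex) (br_E a Ey) brDl brDr cv_central cv_central_r !addr0.
by rewrite piED.
Qed.
Lemma bE_anti x y : piE (br x y) = - piE (br y x).
Proof. by rewrite brA piEN. Qed.

Definition adL : 'Hom(V, 'End(V)) := linfun adE.
Lemma adLE a : adL a = adE a.
Proof. by rewrite /adL lfunE_gen // => c x y; apply: adE_lin_a. Qed.

Definition zc := (Ev :&: lker adL)%VS.
Lemma mem_zc c : c \in zc <-> c \in Ev /\ forall z, z \in Ev -> piE (br c z) = 0.
Proof.
rewrite /zc memv_cap memv_ker adLE; split.
  case/andP => Ec /eqP H; split=> // z Ez; by rewrite -adE_E // H zero_lfunE.
case=> Ec H; rewrite Ec /=; apply/eqP/lfunP => y.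
by rewrite adEE zero_lfunE H // piE_in.
Qed.
Definition sE := (Ev :&: orthv B zc)%VS.
Lemma mem_s y : y \in sE <-> y \in Ev /\ forall c, c \in zc -> B y c = 0.
Proof.
rewrite /sE memv_cap; split.
  by case/andP => Ey /(memv_orth BL Bsym) H.
by case=> Ey H; rewrite Ey; apply/(memv_orth BL Bsym).
Qed.
Lemma adE0 a : adE a 0 = 0.
Proof. by rewrite linear0. Qed.
Lemma zc_adE a c : c \in zc -> adE a c \in zc.
Proof.
case/mem_zc => Ec Hc; apply/mem_zc; split; first exact: adE_in.
move=> z Ez; have := adE_der a Ec Ez; rewrite Hc // adE0.
by rewrite [piE (br c _)]Hc ?adE_in // addr0 => <-.
Qed.
Lemma s_adE a y : y \in sE -> adE a y \in sE.
Proof.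
case/mem_s => Ey Hy; apply/mem_s; split; first exact: adE_in.
move=> c Zc; have Ec : c \in Ev by case/mem_zc: Zc.
by rewrite adE_skew // Hy ?oppr0 //; apply: zc_adE.
Qed.
Lemma s_zc0 y : y \in sE -> y \in zc -> y = 0.
Proof.
case/mem_s => Ey Hy Zy; apply/eqP/negPn/negP => ynz.
by have := E_pos Ey ynz; rewrite Hy // ltxx.
Qed.

Lemma adE_on_E a (f : 'End(V)) : (forall y, y \in Ev -> f y = adE a y) ->
  forall y, f (piE y) = adE a y.
Proof. by move=> H y; rewrite H ?piE_in // !adEE piE_idem. Qed.

Lemma inner j : exists2 s0, s0 \in Ev & forall x, x \in sE -> adE (u j) x = adE s0 x.
Proof.
have [X [HX1 HX2]] := orth_basis BL Bsym E_pos.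
have XE z : z \in X -> z \in Ev by case/HX1.
pose HS (A C : 'End(V)) := HSf B X A C.
have hlinHS : forall a A C D, HS (a *: A + C) D = a * HS A D + HS C D.
  move=> a A C D; rewrite /HS /HSf mulr_sumr -big_split; apply: eq_bigr => z _.
  by rewrite add_lfunE scale_lfunE BL mulrDl mulrA.
have hsymHS : forall A C, HS A C = HS C A.
  by move=> A C; apply: eq_bigr => z _; rewrite Bsym.
set Ad := (adL @: Ev)%VS.
have pdAd : forall a, a \in Ad -> a != 0 -> 0 < HS a a.
  move=> a /memv_imgP [x Ex ->]; rewrite adLE => anz.
  have ge := HS_ge0 BL E_pos HX1 (A := adE x) (fun z _ => adE_in x z).
  rewrite lt_def ge andbT.
  apply/eqP => H0; move/eqP: anz; apply; apply/lfunP => y.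
  rewrite zero_lfunE adEE -(adE_E x (piE_in y)).
  exact: (HS_zero BL E_pos HX1 HX2 (A := adE x) (fun z _ => adE_in x z) H0 (piE_in y)).
have [a0 Ha0 Horth] := GP hlinHS hsymHS pdAd (adE (u j)).
case/memv_imgP: Ha0 => s0 Es0 a0E; rewrite a0E adLE in Horth.
exists s0 => //.
set a' := u j - s0.
have Ha' : adE (u j) - adE s0 = adE a' by rewrite adE_sub.
rewrite Ha' in Horth.
have key : forall x, x \in Ev -> adE a' x \in zc.
  move=> x Ex; set w := adE a' x.
  have Ew : w \in Ev by apply: adE_in.
  suff : HS (adE w) (adE w) = 0.
    move=> H0; apply/mem_zc; split=> // z Ez; rewrite -adE_E //.
    by apply: (HS_zero BL E_pos HX1 HX2) H0 z Ez => y _; apply: adE_in.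
  have S1 : HS (adE w) (adE w) =
    HSf B X (fun z => adE a' (adE x z) - adE x (adE a' z)) (adE w).
    apply: eq_big_seq => z Xz; congr (B _ _ / _).
    have Ez := XE z Xz; have := adE_der a' Ex Ez.
    rewrite -!adE_E ?adE_in // -/w => ->; by rewrite addrK.
  have Sneg : forall (f g : V -> V), HSf B X (fun z => f z - g z) (adE w) =
      - HSf B X (fun z => g z - f z) (adE w).
    move=> f g; rewrite /HSf -sumrN; apply: eq_bigr => z _.
    by rewrite -opprB BNl mulNr.
  rewrite S1 Sneg (HS_inv BL Bsym HX1 HX2) ?opprK; first last.
  - by move=> y z Ey Ez; apply: adE_skew.
  - by move=> y z Ey Ez; apply: adE_skew.
  - by move=> y z Ey Ez; apply: adE_skew.
  - by move=> z _; apply: adE_in.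
  - by move=> z _; apply: adE_in.
  - by move=> z _; apply: adE_in.
  have -> : HSf B X (adE a') (fun z => adE x (adE w z) - adE w (adE x z)) =
            HS (adE a') (adL (piE (br x w))).
    apply: eq_big_seq => z Xz; congr (B _ _ / _); rewrite adLE.
    have Ez := XE z Xz; have := adE_der x Ew Ez.
    rewrite -!adE_E ?adE_in // => ->; by rewrite addrK.
  by apply: Horth; apply: memv_img; apply: piE_in.
move=> x sx; apply/eqP; rewrite -subr_eq0; apply/eqP.
have : adE a' x = 0 by apply: s_zc0; [apply: s_adE | apply: key; case/mem_s: sx].
by rewrite -Ha' add_lfunE opp_lfunE.
Qed.

Lemma bE_zero x y : x \in Ev -> y \in Ev -> piE (br x y) = 0.
Proof.
move=> Ex Ey; apply/eqP/negPn/negP => w0nz.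
have [sj Esj Hsj] := fin_all_exists2 (U := fun _ => V) inner.
set w0 := piE (br x y) in w0nz.
have sw0 : w0 \in sE.
  apply/mem_s; split; first exact: piE_in.
  move=> c /mem_zc [Ec Hc].
  rewrite /w0 B_piE // Binv -(B_piE_r _ Ey) bE_anti Hc //.
  by rewrite oppr0 B0r oppr0.
have [a [Ea Ha]] : exists a, a \in Ev /\ piE (br w0 a) != 0.
  apply: NNPP => H; move/eqP: w0nz; apply; apply: s_zc0 sw0 _.
  apply/mem_zc; split; first exact: piE_in.
  by move=> z Ez; apply/eqP/negPn/negP => hz; apply: H; exists z.
pose eb (k : 'I_(\dim Ev)) := (vbasis Ev)`_k.
pose sb (l : 'I_(\dim sE)) := (vbasis sE)`_l.
pose Tf (M : 'M[R]_(\dim Ev, \dim sE)) := \sum_k \sum_l M k l *: br (eb k) (sb l).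
have Tlin : forall c M N, Tf (c *: M + N) = c *: Tf M + Tf N.
  move=> c M N; rewrite /Tf scaler_sumr -big_split; apply: eq_bigr => k _.
  rewrite scaler_sumr -big_split; apply: eq_bigr => l _.
  by rewrite !mxE scalerDl scalerA.
pose T : 'Hom('M[R]_(\dim Ev, \dim sE), V) := linfun Tf.
have TE M : T M = Tf M by rewrite /T lfunE_gen.
set I := (T @: fullv)%VS.
have I1 : forall x y, x \in Ev -> y \in sE -> br x y \in I.
  move=> x1 y1 Ex1 sy1.
  have -> : br x1 y1 = T (\matrix_(k, l) (coord (vbasis Ev) k x1 * coord (vbasis sE) l y1)).
    rewrite TE /Tf {1}(coord_vbasis Ex1) {1}(coord_vbasis sy1) brsuml.
    apply: eq_bigr => k _; rewrite brZl brsumr scaler_sumr.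
    by apply: eq_bigr => l _; rewrite brZr scalerA mxE.
  by apply: memv_img; apply: memvf.
have sEv z : z \in sE -> z \in Ev by case/mem_s.
have I2 : forall a z, z \in I -> br a z \in I.
  move=> a1 z /memv_imgP [M _ ->]; rewrite TE /Tf brsumr.
  apply: rpred_sum => k _; rewrite brsumr; apply: rpred_sum => l _.
  rewrite brZr; apply: memvZ.
  have Ek : eb k \in Ev by apply: vbasis_mem; apply: mem_nth; rewrite size_tuple.
  have sl : sb l \in sE by apply: vbasis_mem; apply: mem_nth; rewrite size_tuple.
  rewrite brJacD; apply: memvD.
    by rewrite (br_E a1 Ek) brDl cv_central addr0; apply: I1 => //; apply: adE_in.
  rewrite (br_E a1 (sEv _ sl)) brDr cv_central_r addr0; apply: I1 => //.
  exact: s_adE.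
pose psi w := w + \sum_k B (sj k) w *: v k.
have psilin : forall c w w', psi (c *: w + w') = c *: psi w + psi w'.
  move=> c w w'; rewrite /psi scalerDr addrACA; congr (_ + _).
  rewrite scaler_sumr -big_split; apply: eq_bigr => k _.
  by rewrite BDr BZr scalerDl scalerA.
pose psiL : 'End(V) := linfun psi.
have psiE w : psiL w = psi w by rewrite /psiL lfunE_gen.
have I3 : forall x y, x \in Ev -> y \in sE -> br x y = psi (piE (br x y)).
  move=> x1 y1 Ex1 sy1; have Ey1 := sEv _ sy1.
  rewrite {1}(br_dec x1 y1) /psi /cv; congr (_ + _); apply: eq_bigr => k _.
  congr (_ *: _).
  have e1 : B (br x1 y1) (u k) = B (br (sj k) x1) y1.
    rewrite Binv brA BNr opprK -(B_piE_r _ Ey1) -adE_E // Bsym adE_skew //.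
    rewrite Hsj // -adE_skew // adE_E // B_piE //.
  by rewrite e1 B_piE_r ?Esj // [in RHS]Bsym [in RHS]Binv [in RHS]brA [in RHS]BNr [in RHS]opprK [in RHS]Bsym.
have I4 : forall z, z \in I -> exists2 w, w \in Ev & z = psi w.
  have sub : (I <= psiL @: Ev)%VS.
    apply/subvP => z /memv_imgP [M _ ->]; rewrite TE /Tf.
    apply: rpred_sum => k _; apply: rpred_sum => l _; apply: memvZ.
    have Ek : eb k \in Ev by apply: vbasis_mem; apply: mem_nth; rewrite size_tuple.
    have sl : sb l \in sE by apply: vbasis_mem; apply: mem_nth; rewrite size_tuple.
    by rewrite I3 // -psiE; apply: memv_img; apply: piE_in.
  move=> z /(subvP sub) /memv_imgP [w Ew ->]; exists w => //; exact: psiE.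
have Bpsi : forall w, w \in Ev -> B (psi w) (psi w) = B w w.
  move=> w Ew; case/memE: (Ew) => Hu Hv.
  have Hw : forall c : 'I_r -> R, B w (\sum_k c k *: v k) = 0.
    by move=> c; rewrite Bsumr big1 // => k _; rewrite BZr Hv mulr0.
  have Hvv2 : forall c d : 'I_r -> R, B (\sum_k c k *: v k) (\sum_k d k *: v k) = 0.
    by move=> c d; rewrite Bsumr big1 // => k _; rewrite BZr Bv_v mulr0.
  by rewrite /psi BDl !BDr Hw Hvv2 (Bsym _ w) Hw !addr0.
have psi0 : forall w, w \in Ev -> psi w = 0 -> w = 0.
  move=> w Ew H0; apply/eqP/negPn/negP => wnz.
  by have := E_pos Ew wnz; rewrite -Bpsi // H0 B0l ltxx.
have Inz : br a w0 \in I by apply: I1.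
have anz : br a w0 != 0.
  apply/eqP => H0; move: Ha; rewrite bE_anti.
  by rewrite H0 piE0 oppr0 eqxx.
apply: (@split_contra I 1).
- by left.
- move=> z Iz znz; have [w Ew zw] := I4 z Iz; rewrite mul1r zw Bpsi //.
  apply: E_pos => //; apply: contraNneq znz => w0'; by rewrite zw w0' /psi big1 ?addr0 // => k _; rewrite B0r scale0r.
- by apply/eqP => I0; move: Inz; rewrite I0 memv0 (negbTE anz).
- pose i0 := Ordinal Hr.
  exists (v i0); split.
    by apply/eqP => v0; have := Huv i0 i0; rewrite v0 B0r eqxx => /eqP; rewrite eq_sym oner_eq0.
  move=> z /I4 [w /memE [Hu Hv] ->]; rewrite /psi BDr Bsym Hv add0r Bsumr big1 // => k _.
  by rewrite BZr Hvv mulr0.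
- exact: I2.
Qed.

Lemma piE_brbr a b c : piE (br a (br b c)) = adE a (piE (br b c)).
Proof. by rewrite adE_E ?piE_in // {1}(br_dec b c) brDr cv_central_r addr0. Qed.

Lemma cv_sum x : cv x = \sum_i B x (u i) *: v i. Proof. by []. Qed.

Lemma Bcv_v x j : B (cv x) (v j) = 0.
Proof. exact: (Bv_v (fun i => B x (u i)) j). Qed.
Lemma Bcvcv x y : B (cv x) (cv y) = 0.
Proof. by rewrite {2}/cv Bsumr big1 // => k _; rewrite BZr Bcv_v mulr0. Qed.

Lemma Bpc P1 P2 x y : P1 \in Ev -> P2 \in Ev -> B (P1 + cv x) (P2 + cv y) = B P1 P2.
Proof.
move=> E1 E2; rewrite BDl !BDr (Bsym P1 (cv y)) (B_cv_E _ E1) (B_cv_E _ E2) Bcvcv.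
by rewrite !addr0.
Qed.

Lemma Bbrbr a b c d : B (br a b) (br c d) = B (piE (br a b)) (piE (br c d)).
Proof.
rewrite {1}(br_dec a b) {1}(br_dec c d); apply: Bpc; exact: piE_in.
Qed.

Lemma struct_main :
  exists (E : {vspace V}),
  exists (K : 'I_r -> 'I_r -> V) (L : 'I_r -> 'I_r -> 'I_r -> R)
         (J : 'I_r -> 'End(V)),
  [/\
   (((\sum_(i < r) (<[u i]> + <[v i]>)) + E)%VS = fullv /\
    \dim (fullv : {vspace V}) = (2 * r + \dim E)%N /\
    pos_definite B E /\
    (forall i x, x \in E -> B (u i) x = 0 /\ B (v i) x = 0) /\
    (forall i j, B (u i) (v j) = (i == j)%:R) /\
    (forall i j, B (u i) (u j) = 0 /\ B (v i) (v j) = 0) /\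
    (forall x, central br x <-> x \in (\sum_(i < r) <[v i]>)%VS)),
   [/\ (forall i j, K i j \in E /\ K i j = - K j i),
       (forall i j k, L i j k = - L j i k /\ L i j k = - L i k j),
       (forall i, (J i @: E <= E)%VS),
       (forall i x y, x \in E -> y \in E -> B (J i x) y = - B x (J i y)) &
       (forall i j x, x \in E -> J i (J j x) - J j (J i x) = 0)],
   [/\ (forall i j, br (u i) (u j) = K i j + \sum_(k < r) L i j k *: v k),
       (forall i x, x \in E ->
          br (u i) x = J i x - \sum_(j < r) B (K i j) x *: v j),
       (forall x y, x \in E -> y \in E ->
          br x y = - \sum_(i < r) B x (J i y) *: v i) &
       (forall i y, br (v i) y = 0)] &
   [/\ (forall i j k, J i (K j k) + J j (K k i) + J k (K i j) = 0) &
       (forall i j k l,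
          B (K l i) (K j k) + B (K l j) (K k i) + B (K l k) (K i j) = 0)]].
Proof.
have [SE dimE] := S_E.
exists Ev, (fun i j => piE (br (u i) (u j))), (fun i j k => B (br (u i) (u j)) (u k)),
  (fun i => adE (u i)).
split.
- split; first exact: SE.
  split; first by rewrite dimE.
  split; first exact: E_pos.
  split; first by move=> i x /memE [H1 H2]; rewrite !(Bsym _ x) H1 H2.
  split; first exact: Huv.
  split; first by move=> i j; rewrite Huu Hvv.
  exact: centre_char.
- split.
  + by move=> i j; rewrite piE_in bE_anti.
  + move=> i j k; split; first by rewrite brA BNl.
    by rewrite Binv Bsym.
  + by move=> i; apply/subvP => y /memv_imgP [x _ ->]; apply: adE_in.
  + by move=> i x y Ex Ey; apply: adE_skew.
  + move=> i j x Ex; have H := congr1 piE (brJacD (u i) (u j) x).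
    rewrite piE_brbr piED piE_brbr in H.
    rewrite (br_dec (u i) (u j)) brDl cv_central addr0 (bE_zero (piE_in _) Ex) add0r in H.
    by rewrite -!adE_E ?adE_in // in H; rewrite H subrr.
- split.
  + by move=> i j; rewrite {1}br_dec.
  + move=> i x Ex; rewrite (br_E (u i) Ex) /cv -sumrN; congr (_ + _).
    apply: eq_bigr => j _; rewrite -scaleNr; congr (_ *: _).
    by rewrite Binv Bsym B_piE.
  + move=> x y Ex Ey; rewrite (br_dec x y) bE_zero // add0r /cv -sumrN.
    apply: eq_bigr => i _; rewrite -scaleNr; congr (_ *: _).
    rewrite Binv brA BNr opprK -(B_piE_r _ Ey) -adE_E // Bsym adE_skew //.
  + exact: Hvc.
- split.
  + move=> i j k; have := congr1 piE (brJac (u i) (u j) (u k)).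
    by rewrite !piED !piE_brbr piE0.
  + move=> i j k l; have H := congr1 (fun z => B z (u l)) (brJac (u i) (u j) (u k)).
    rewrite /= !BDl B0l (Binv (u i) (br (u j) (u k)) (u l))
      (Binv (u j) (br (u k) (u i)) (u l)) (Binv (u k) (br (u i) (u j)) (u l)) !Bbrbr in H.
    rewrite (Bsym (piE (br (u j) (u k)))) (Bsym (piE (br (u k) (u i))))
      (Bsym (piE (br (u i) (u j)))) in H.
    rewrite (bE_anti (u l) (u i)) (bE_anti (u l) (u j)) (bE_anti (u l) (u k)) !BNl.
    exact: H.
Qed.

End Struct.



End Main.

Unset Implicit Arguments.


Theorem mainTheorem1 (R : realType) (V : vectType R)
    (br : V -> V -> V) (B : V -> V -> R) (r : nat) :
  is_lie_bracket br -> is_metric br B -> indecomposable br B ->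
  has_index B r -> (0 < r)%N -> has_max_isotropic_centre br B r ->
  exists (u v : 'I_r -> V) (E : {vspace V}),
  exists (K : 'I_r -> 'I_r -> V) (L : 'I_r -> 'I_r -> 'I_r -> R)
         (J : 'I_r -> 'End(V)),
  [/\
   (((\sum_(i < r) (<[u i]> + <[v i]>)) + E)%VS = fullv /\
    \dim (fullv : {vspace V}) = (2 * r + \dim E)%N /\
    pos_definite B E /\
    (forall i x, x \in E -> B (u i) x = 0 /\ B (v i) x = 0) /\
    (forall i j, B (u i) (v j) = (i == j)%:R) /\
    (forall i j, B (u i) (u j) = 0 /\ B (v i) (v j) = 0) /\
    (forall x, central br x <-> x \in (\sum_(i < r) <[v i]>)%VS)),
   [/\ (forall i j, K i j \in E /\ K i j = - K j i),
       (forall i j k, L i j k = - L j i k /\ L i j k = - L i k j),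
       (forall i, (J i @: E <= E)%VS),
       (forall i x y, x \in E -> y \in E -> B (J i x) y = - B x (J i y)) &
       (forall i j x, x \in E -> J i (J j x) - J j (J i x) = 0)],
   [/\ (forall i j, br (u i) (u j) = K i j + \sum_(k < r) L i j k *: v k),
       (forall i x, x \in E ->
          br (u i) x = J i x - \sum_(j < r) B (K i j) x *: v j),
       (forall x y, x \in E -> y \in E ->
          br x y = - \sum_(i < r) B x (J i y) *: v i) &
       (forall i y, br (v i) y = 0)] &
   [/\ (forall i j k, J i (K j k) + J j (K k i) + J k (K i j) = 0) &
       (forall i j k l,
          B (K l i) (K j k) + B (K l j) (K k i) + B (K l k) (K i j) = 0)]].
Proof.
move=> Hlie Hmet Hind [_ Hmax] Hr [Z [Zc dZ Ziso]].
have BL := BL Hmet; have Bsym := Bsym Hmet; have Bnd := Bnd Hmet.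
pose X := vbasis Z.
pose v (i : 'I_r) := X`_i.
have vZ i : v i \in Z.
  by apply: vbasis_mem; apply: mem_nth; rewrite size_tuple dZ.
have Hvc i y : br (v i) y = 0 by apply: Zc; apply: vZ.
have Hvv i j : B (v i) (v j) = 0 by apply: Ziso.
have freeX : free X by apply: basis_free (vbasisP Z).
pose f (i : 'I_r) y := coord X (cast_ord (esym dZ) i) (projv Z y).
have flin i : forall a x y, f i (a *: x + y) = a * f i x + f i y.
  by move=> a x y; rewrite /f linearP /= linearP.
have fv i j : f i (v j) = (j == i)%:R.
  rewrite /f projv_id //.
  have -> : v j = X`_(cast_ord (esym dZ) j) by [].
  by rewrite coord_free // (inj_eq (@cast_ord_inj _ _ _)).
have [u' Hu'] := @fin_all_exists _ (fun _ => V) (fun i x => forall y, B x y = f i y)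
  (fun i => Riesz BL Bsym Bnd (flin i)).
have Hu'v i j : B (u' i) (v j) = (i == j)%:R by rewrite Hu' fv eq_sym.
pose a i k := B (u' i) (u' k).
pose u i := u' i - 2^-1 *: \sum_k a i k *: v k.
have Bxs x (c : 'I_r -> R) : B x (\sum_k c k *: v k) = \sum_k c k * B x (v k).
  by rewrite (hsumr BL Bsym); apply: eq_bigr => k _; rewrite (hZr BL Bsym).
have Bsv (c : 'I_r -> R) j : B (\sum_k c k *: v k) (v j) = 0.
  by rewrite Bsym Bxs big1 // => k _; rewrite Hvv mulr0.
have Huv i j : B (u i) (v j) = (i == j)%:R.
  by rewrite /u (hBl BL) (hZl BL) Bsv mulr0 subr0 Hu'v.
have e1 i j : \sum_k a j k * B (u' i) (v k) = a j i.
  rewrite (eq_bigr (fun k => a j k * (k == i)%:R)) ?sum_delta // => k _.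
  by rewrite Hu'v eq_sym.
have Huu i j : B (u i) (u j) = 0.
  rewrite /u (hBl BL) !(hBr BL Bsym) !(hZl BL) !(hZr BL Bsym).
  rewrite (Bsym (\sum_k a i k *: v k) (u' j)) !Bxs e1 e1.
  rewrite (eq_bigr (fun k => 0)); last by move=> k _; rewrite Bsv mulr0.
  rewrite big1 // /a (Bsym (u' j)); lra.
exists u, v.
apply: (struct_main Hlie Hmet Huv Huu Hvv Hvc Hmax Hind Hr).
Qed.
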